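(* Let $\mathbb G=V_1\times V_2$ be a step-two Carnot group. Then $\mathcal A_h(\mathbb G)=\mathcal A(V_1\times V_2)$ if and only if the following holds: whenever $b:V_1\times V_2\to\mathbb R$ is bilinear and $b(x,[x,x'])=0$ for all $x,x'\in V_1$, then $b=0$.
   Context: A step-two Carnot group is $\mathbb G=V_1\times V_2$, where $V_1,V_2$ are finite-dimensional real vector spaces with $V_2\neq\{0\}$, equipped with a bilinear skew-symmetric map $[\cdot,\cdot]:V_1\times V_1\to V_2$ with $\operatorname{span}\{[x,x']:x,x'\in V_1\}=V_2$, and group law $(x,z)\cdot(x',z')=(x+x',z+z'+[x,x'])$. $\mathcal A_h(\mathbb G)$ is the space of $h$-affine maps $f:\mathbb G\to\mathbb R$, i.e. such that for all $(x,z)\in\mathbb G$, $y\in V_1$, $t\in\mathbb R\mapsto f((x,z)\cdot(ty,0))$ is affine; $\mathcal A(V_1\times V_2)$ is the space of maps that are affine in the usual sense on the vector space $V_1\times V_2$. *)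

(* Defs.v *)
From HB Require Import structures.
From mathcomp Require Import all_boot all_order all_algebra.
From mathcomp Require Import reals.
Set Implicit Arguments. Unset Strict Implicit. Unset Printing Implicit Defensive.
Import Order.TTheory GRing.Theory Num.Theory.
Local Open Scope ring_scope.

Definition bilinear_skew (R : realType) (V1 V2 : vectType R)
  (br : V1 -> V1 -> V2) : Prop :=
  (forall (a : R) (x y z : V1), br (a *: x + y) z = a *: br x z + br y z) /\
  (forall (a : R) (x y z : V1), br z (a *: x + y) = a *: br z x + br z y) /\
  (forall x y : V1, br x y = - br y x).

Definition brackets_span (R : realType) (V1 V2 : vectType R)
  (br : V1 -> V1 -> V2) : Prop :=
  forall z : V2, exists (k : nat) (c : 'I_k -> R) (x x' : 'I_k -> V1),
    z = \sum_(i < k) c i *: br (x i) (x' i).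

Definition carnot2 (R : realType) (V1 V2 : vectType R)
  (br : V1 -> V1 -> V2) : Prop :=
  bilinear_skew br /\ brackets_span br /\ exists z : V2, z != 0.

Definition gmul (R : realType) (V1 V2 : vectType R) (br : V1 -> V1 -> V2)
  (p q : V1 * V2) : V1 * V2 :=
  (p.1 + q.1, p.2 + q.2 + br p.1 q.1).

Definition h_affine (R : realType) (V1 V2 : vectType R) (br : V1 -> V1 -> V2)
  (f : V1 * V2 -> R) : Prop :=
  forall (p : V1 * V2) (y : V1), exists a b : R,
    forall t : R, f (gmul br p (t *: y, 0)) = a * t + b.

Definition affine_map (R : realType) (V1 V2 : vectType R)
  (f : V1 * V2 -> R) : Prop :=
  exists (L : V1 * V2 -> R) (c : R),
    (forall (a : R) (p q : V1 * V2),
        L (a *: p.1 + q.1, a *: p.2 + q.2) = a * L p + L q) /\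
    (forall p, f p = L p + c).

Definition bilinear_form (R : realType) (V1 V2 : vectType R)
  (b : V1 -> V2 -> R) : Prop :=
  (forall (a : R) (x y : V1) (z : V2), b (a *: x + y) z = a * b x z + b y z) /\
  (forall (a : R) (x : V1) (z w : V2), b x (a *: z + w) = a * b x z + b x w).

(* Main.v *)
Require Import Defs.
From HB Require Import structures.
From mathcomp Require Import all_boot all_order all_algebra.
From mathcomp Require Import reals.
From mathcomp Require Import ring lra.
Import Order.TTheory GRing.Theory Num.Theory.
Local Open Scope ring_scope.

Section Main.
Variables (R : realType) (V1 V2 : vectType R) (br : V1 -> V1 -> V2).
Hypothesis hbr : bilinear_skew br.

Lemma br0l z : br 0 z = 0.
Proof.
case: hbr => h1 _.
have := h1 (-1) 0 0 z; rewrite scaleN1r oppr0 add0r scaleN1r.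
by move/eqP; rewrite addNr eq_sym => /eqP.
Qed.
Lemma brDl x y z : br (x + y) z = br x z + br y z.
Proof. by case: hbr => h1 _; rewrite -[x]scale1r h1 !scale1r. Qed.
Lemma brZl a x z : br (a *: x) z = a *: br x z.
Proof. by case: hbr => h1 _; rewrite -[a *: x]addr0 h1 br0l addr0. Qed.
Lemma br0r z : br z 0 = 0.
Proof.
case: hbr => _ [h2 _].
have := h2 (-1) 0 0 z; rewrite scaleN1r oppr0 add0r scaleN1r.
by move/eqP; rewrite addNr eq_sym => /eqP.
Qed.
Lemma brDr x y z : br z (x + y) = br z x + br z y.
Proof. by case: hbr => _ [h2 _]; rewrite -[x]scale1r h2 !scale1r. Qed.
Lemma brZr a x z : br z (a *: x) = a *: br z x.
Proof. by case: hbr => _ [h2 _]; rewrite -[a *: x]addr0 h2 br0r addr0. Qed.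
Lemma brC x y : br x y = - br y x.
Proof. by case: hbr => _ [_ h3]. Qed.
Lemma brNl x y : br (- x) y = - br x y.
Proof. by rewrite -scaleN1r brZl scaleN1r. Qed.
Lemma brNr x y : br x (- y) = - br x y.
Proof. by rewrite -scaleN1r brZr scaleN1r. Qed.
Lemma brxx x : br x x = 0.
Proof.
have h : br x x + br x x = 0 by rewrite {1}brC addNr.
have h2 : (2:R) *: br x x = 0 by rewrite scaler_nat mulr2n h.
have n2 : (2:R) != 0 by rewrite pnatr_eq0.
by rewrite -[br x x]scale1r -(mulVf n2) -scalerA h2 scaler0.
Qed.

Definition aff (phi : R -> R) := exists a b, forall t, phi t = a * t + b.

Lemma affE {phi} : aff phi -> forall t, phi t = phi 0 + t * (phi 1 - phi 0).
Proof. by case=> a [b H] t; rewrite !H; ring. Qed.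

Lemma affI phi : (forall t, phi t = phi 0 + t * (phi 1 - phi 0)) -> aff phi.
Proof. by move=> H; exists (phi 1 - phi 0), (phi 0) => t; rewrite H; ring. Qed.

Lemma aff_ext {phi psi} : (forall t, phi t = psi t) -> aff phi -> aff psi.
Proof. by move=> e [a [b H]]; exists a, b => t; rewrite -e. Qed.

Lemma aff_lin k1 k2 {phi psi} : aff phi -> aff psi -> aff (fun t => k1 * phi t + k2 * psi t).
Proof.
case=> a [b H] [a' [b' H']]; exists (k1 * a + k2 * a'), (k1 * b + k2 * b') => t.
rewrite H H'; ring.
Qed.

Lemma aff_const_of {h} : aff h -> aff (fun t => t * h t) -> forall t, h t = h 0.
Proof.
move=> [a [b H]] [c [d H']] t.
have e0 := H' 0; have e1 := H' 1; have e2 := H' (-1).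
rewrite H in e0; rewrite H in e1; rewrite H in e2; rewrite !H.
have -> : a = 0 by lra.
ring.
Qed.


Lemma hlineA {g} : h_affine br g -> forall x z y, aff (fun t => g (x + t *: y, z + t *: br x y)).
Proof.
move=> hg x z y; case: (hg (x, z) y) => a [b H]; exists a, b => t.
by rewrite -H /gmul /= addr0 brZr.
Qed.

Lemma hlineE {g} : h_affine br g -> forall x z y t,
  g (x + t *: y, z + t *: br x y) = g (x, z) + t * (g (x + y, z + br x y) - g (x, z)).
Proof.
move=> hg x z y t; rewrite (affE (hlineA hg x z y)) !scale0r !addr0 !scale1r //.
Qed.

Lemma haff_transl g a : h_affine br g ->
  h_affine br (fun p => g (a + p.1, p.2 + br a p.1)).
Proof.
move=> hg [x z] y; case: (hlineA hg (a + x) (z + br a x) y) => A [B H].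
exists A, B => t; rewrite -H /gmul /=; congr (g (_, _)); first by rewrite addrA.
rewrite addr0 !brDr !brDl !brZr scalerDr.
by rewrite -!addrA; f_equal; rewrite addrCA; f_equal; rewrite addrC.
Qed.

Lemma haff_central g w : h_affine br g -> h_affine br (fun p => g (p.1, p.2 + w)).
Proof.
move=> hg [x z] y; case: (hg (x, z + w) y) => A [B H].
exists A, B => t; rewrite -H /gmul /=; congr (g (_, _)).
by rewrite !addr0 addrAC.
Qed.

Lemma haff_sub g1 g2 : h_affine br g1 -> h_affine br g2 -> h_affine br (fun p => g1 p - g2 p).
Proof.
move=> h1 h2 p y; case: (h1 p y) => a [b H]; case: (h2 p y) => a' [b' H'].
by exists (a - a'), (b - b') => t; rewrite H H'; ring.
Qed.


Lemma hom {g} : h_affine br g -> forall w v t,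
  g (t *: v, w) - g (0, w) = t * (g (v, w) - g (0, w)).
Proof.
move=> hg w v t; have := hlineE hg 0 w v t.
rewrite br0l scaler0 !addr0 !add0r => ->; ring.
Qed.

Lemma three_dir {F : R -> R -> R} :
  (forall t0 m0, aff (fun s => F (t0 + s) (m0 + s))) ->
  (forall t0 m0, aff (fun s => F (t0 + s) (m0 + 4 * s))) ->
  (forall t0 m0, aff (fun s => F (t0 + s) (m0 + 9 * s))) ->
  forall t, F t 0 = F 0 0 + t * (F 1 0 - F 0 0).
Proof.
move=> h1 h2 h3.
pose G s1 s2 := F (s1 + s2) (s1 + 4 * s2).
have G1 s1 s2 : G s1 s2 = G 0 s2 + s1 * (G 1 s2 - G 0 s2).
  have := affE (h1 s2 (4 * s2)) s1; rewrite /G !add0r !addr0.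
  by rewrite [s2 + s1]addrC [4 * s2 + s1]addrC [s2 + 1]addrC [4 * s2 + 1]addrC.
have G2 s1 s2 : G s1 s2 = G s1 0 + s2 * (G s1 1 - G s1 0).
  exact: (affE (h2 s1 s1) s2).
have GF s1 s2 : G s1 s2 = G 0 0 + s1 * (G 1 0 - G 0 0) + s2 * (G 0 1 - G 0 0)
    + s1 * s2 * (G 1 1 - G 1 0 - G 0 1 + G 0 0).
  rewrite G1 (G2 0 s2) (G2 1 s2); ring.
have e3 := affE (h3 0 0) 3; have e3' := affE (h3 0 0) (-3).
rewrite !add0r !mulr0 in e3 e3'.
have eA : F 3 (9 * 3) = G (-5) 8 by rewrite /G; f_equal; ring.
have eB : F (-3) (9 * -3) = G 5 (-8) by rewrite /G; f_equal; ring.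
have eC : F 0 0 = G 0 0 by rewrite /G; f_equal; ring.
have eD : F 1 (9 * 1) = F 1 (9 * 1) by [].
rewrite eA eB eC in e3 e3'.
have hd : G 1 1 - G 1 0 - G 0 1 + G 0 0 = 0.
  move: e3 e3'; rewrite (GF (-5) 8) (GF 5 (-8)) => e3 e3'; lra.
move=> t.
have eE : forall u, F u 0 = G (4 * u / 3) (- u / 3).
  by move=> u; rewrite /G; f_equal; field.
rewrite (eE t) (eE 1) eC (GF (4 * t / 3)) (GF (4 * 1 / 3)) hd; by field.
Qed.

Lemma kdir {g} : h_affine br g -> forall w v d (l : R), l != 0 -> forall t0 m0,
  aff (fun s => (g (v + (t0 + s) *: d, w + (m0 + l * l * s) *: br v d)
                - g (0, w + (m0 + l * l * s) *: br v d))).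
Proof.
move=> hg w v d l l0 t0 m0.
pose W s := w + (m0 + l * l * s) *: br v d.
pose Q s := g (v + (t0 + s) *: d, W s) - g (0, W s).
have key : forall l', l' * l' = l * l -> forall s,
    g ((l' *: (v + t0 *: d)) + s *: (l' *: d), (w + m0 *: br v d) + s *: br (l' *: (v + t0 *: d)) (l' *: d))
    = g (0, W s) + l' * Q s.
  move=> l' hl s.
  have e1 : (l' *: (v + t0 *: d)) + s *: (l' *: d) = l' *: (v + (t0 + s) *: d).
    by rewrite scalerDl !scalerDr !scalerA addrA [s * l']mulrC.
  have e2 : (w + m0 *: br v d) + s *: br (l' *: (v + t0 *: d)) (l' *: d) = W s.
    rewrite brZl brZr brDl brZl brxx scaler0 addr0 !scalerA /W scalerDl -addrA; f_equal.
    by rewrite hl mulrC.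
  rewrite e1 e2 /Q -(hom hg (W s) (v + (t0 + s) *: d) l'); ring.
have A1 := hlineA hg (l *: (v + t0 *: d)) (w + m0 *: br v d) (l *: d).
have A2 := hlineA hg ((- l) *: (v + t0 *: d)) (w + m0 *: br v d) ((- l) *: d).
have k1 := key l erefl.
have k2 := key (- l) (mulrNN l l).
apply: (aff_ext _ (aff_lin ((2 * l)^-1) (- (2 * l)^-1) A1 A2)) => s /=.
rewrite k1 k2 /Q /W; field.
by [].
Qed.


Lemma lin_line {g} : h_affine br g -> forall w v d t,
  g (v + t *: d, w) - g (0, w) =
  (g (v, w) - g (0, w)) + t * ((g (v + d, w) - g (0, w)) - (g (v, w) - g (0, w))).
Proof.
move=> hg w v d t.
pose F t m := g (v + t *: d, w + m *: br v d) - g (0, w + m *: br v d).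
have hk : forall l : R, l != 0 -> forall k, k = l * l ->
    forall t0 m0, aff (fun s => F (t0 + s) (m0 + k * s)).
  move=> l l0 k -> t0 m0; exact: (@kdir g hg w v d l l0 t0 m0).
have h1 : forall t0 m0, aff (fun s => F (t0 + s) (m0 + s)).
  move=> t0 m0; apply: aff_ext (hk 1 (oner_neq0 _) 1 (esym (mulr1 1)) t0 m0) => s.
  by rewrite mul1r.
have h2 := hk 2 ltac:(by rewrite pnatr_eq0) 4 ltac:(by rewrite -natrM).
have h3 := hk 3 ltac:(by rewrite pnatr_eq0) 9 ltac:(by rewrite -natrM).
have := three_dir (F:=F) h1 h2 h3 t.
by rewrite /F !scale0r !addr0 scale1r.
Qed.

Lemma Klin {g} : h_affine br g -> forall w a x y,
  g (a *: x + y, w) - g (0, w) = a * (g (x, w) - g (0, w)) + (g (y, w) - g (0, w)).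
Proof.
move=> hg w.
have Kadd : forall x y, g (x + y, w) - g (0, w) = (g (x, w) - g (0, w)) + (g (y, w) - g (0, w)).
  move=> x y.
  have e1 : x + y = 2 *: ((2^-1 : R) *: (x + y)).
    have h1 : (2 * 2^-1 : R) = 1 by field.
    by rewrite scalerA h1 scale1r.
  have e2 : (2^-1 : R) *: (x + y) = x + 2^-1 *: (y - x).
    have hx : x = 2^-1 *: x + 2^-1 *: x.
      have h1 : (2^-1 + 2^-1 : R) = 1 by field.
      by rewrite -scalerDl h1 scale1r.
    rewrite scalerDr scalerBr {2}hx; apply: esym.
    by rewrite addrC addrA subrK addrC.
  rewrite e1 (hom hg) e2 (lin_line hg) [x + (y - x)]addrC subrK; by field.
by move=> a x y; rewrite Kadd (hom hg).
Qed.


Definition Ps (g : V1 * V2 -> R) x z := g (x, z) - g (0, z).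

Lemma gPs g u w : g (u, w) = g (0, w) + Ps g u w.
Proof. rewrite /Ps; ring. Qed.

Lemma PsD {g} : h_affine br g -> forall u v w, Ps g (u + v) w = Ps g u w + Ps g v w.
Proof. by move=> hg u v w; have := Klin hg w 1 u v; rewrite scale1r mul1r. Qed.

Lemma PsZ {g} : h_affine br g -> forall a u w, Ps g (a *: u) w = a * Ps g u w.
Proof. by move=> hg a u w; rewrite /Ps (hom hg). Qed.

Lemma aff_add {phi} a b : aff phi -> aff (fun t => phi t + a * t + b).
Proof. by case=> a' [b' H]; exists (a' + a), (b' + b) => t; rewrite H; ring. Qed.

Lemma S2 {g} : h_affine br g -> forall x y z, aff (fun t => Ps g y (z + t *: br x y)).
Proof.
move=> hg x y z.
have A1 := hlineA hg (x + y) z y.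
have A0 := hlineA hg x z y.
apply: (aff_ext _ (aff_lin 1 (-1) A1 A0)) => t /=.
rewrite brDl brxx addr0 addrAC (gPs g (x + t *: y + y)) (gPs g (x + t *: y)) (PsD hg).
ring.
Qed.

Lemma F3 {g} : h_affine br g -> forall x y z t, Ps g x (z + t *: br x y) = Ps g x z.
Proof.
move=> hg x y z t.
have h : aff (fun t => Ps g x (z + t *: br x y)).
  by apply: (aff_ext _ (S2 hg (- y) x z)) => s; rewrite brNl -brC.
have ht : aff (fun t => t * Ps g x (z + t *: br x y)).
  have A1 := hlineA hg x z (y + x).
  have A0 := hlineA hg x z y.
  apply: (aff_ext _ (aff_lin 1 (-1) A1 A0)) => s /=.
  rewrite brDr brxx addr0 (gPs g (x + s *: (y + x))) (gPs g (x + s *: y)).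
  rewrite !(PsD hg) !(PsZ hg) (PsD hg); ring.
by rewrite (aff_const_of h ht t) scale0r addr0.
Qed.

Lemma F2m {g} : h_affine br g -> forall x y z, aff (fun t => g (0, z + t *: br x y)).
Proof.
move=> hg x y z.
have A0 := hlineA hg x z y.
apply: (aff_ext _ (aff_add (- Ps g y z) (- Ps g x z) A0)) => t /=.
rewrite (gPs g (x + t *: y)) (PsD hg) (PsZ hg) (F3 hg).
have -> : br x y = br y (- x) by rewrite brNr -brC.
rewrite (F3 hg); ring.
Qed.

Lemma F2 {g} : h_affine br g -> forall a x y z, aff (fun t => g (a, z + t *: br x y)).
Proof.
move=> hg a x y z.
have := F2m (haff_transl _ a hg) x y z.
by apply: aff_ext => t /=; rewrite addr0 br0r addr0.
Qed.


Lemma span_list : brackets_span br -> forall n (l : 'I_n -> V2), exists N (u v : 'I_N -> V1),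
  forall a : 'I_n -> R, exists t : 'I_N -> R,
  \sum_(i < n) a i *: l i = \sum_(j < N) t j *: br (u j) (v j).
Proof.
move=> hs; elim=> [|n IH] l.
  by exists 0%N, (fun _ => 0), (fun _ => 0) => a; exists (fun _ => 0); rewrite !big_ord0.
have [N [u [v H]]] := IH (fun i => l (lift ord0 i)).
have [k [c [x [x' e0]]]] := hs (l ord0).
pose u' (j : 'I_(k + N)) := match split j with inl i => x i | inr i => u i end.
pose v' (j : 'I_(k + N)) := match split j with inl i => x' i | inr i => v i end.
exists (k + N)%N, u', v' => a.
have [t Ht] := H (fun i => a (lift ord0 i)).
pose t' (j : 'I_(k + N)) := match split j with inl i => a ord0 * c i | inr i => t i end.
exists t'.
rewrite big_ord_recl /= Ht e0 big_split_ord /= scaler_sumr.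
congr (_ + _); apply: eq_bigr => i _.
  by rewrite /t' /u' /v' (@unsplitK k N (inl i)) scalerA.
by rewrite /t' /u' /v' (@unsplitK k N (inr i)).
Qed.

Lemma span_fam : brackets_span br -> exists N (u v : 'I_N -> V1),
  forall z, exists t : 'I_N -> R, z = \sum_(j < N) t j *: br (u j) (v j).
Proof.
move=> hs.
have [N [u [v H]]] := span_list hs _ (fun i : 'I_(\dim (fullv : {vspace V2})) => (vbasis (fullv : {vspace V2}))`_i).
exists N, u, v => z.
have [t Ht] := H (fun i => coord (vbasis fullv) i z).
by exists t; rewrite -Ht -coord_vbasis // memvf.
Qed.

Lemma sum_rep N (E : 'I_N -> V2) (phi : V2 -> R) (al : 'I_N -> R) :
  (forall z j s, phi (z + s *: E j) = phi z + s * al j) ->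
  forall (r : seq 'I_N) (t : 'I_N -> R) z,
  phi (z + \sum_(j <- r) t j *: E j) = phi z + \sum_(j <- r) t j * al j.
Proof.
move=> h; elim=> [|j r IH] t z; first by rewrite !big_nil !addr0.
by rewrite !big_cons [t j *: E j + _]addrC addrA h IH; ring.
Qed.

Lemma lin_rep N (E : 'I_N -> V2) :
  (forall z, exists t : 'I_N -> R, z = \sum_(j < N) t j *: E j) ->
  forall (phi : V2 -> R) (al : 'I_N -> R),
  (forall z j s, phi (z + s *: E j) = phi z + s * al j) ->
  forall a z z', phi (a *: z + z') - phi 0 = a * (phi z - phi 0) + (phi z' - phi 0).
Proof.
move=> hE phi al h a z z'.
have rep : forall t : 'I_N -> R, phi (\sum_(j < N) t j *: E j) = phi 0 + \sum_(j < N) t j * al j.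
  by move=> t; rewrite -[\sum_(j < N) _ *: _]add0r (@sum_rep _ _ _ _ h).
have [t Ht] := hE z; have [t' Ht'] := hE z'.
have -> : a *: z + z' = \sum_(j < N) (a * t j + t' j) *: E j.
  rewrite Ht Ht' scaler_sumr -big_split; apply: eq_bigr => j _.
  by rewrite scalerA scalerDl.
rewrite Ht Ht' !rep.
have -> : \sum_(j < N) (a * t j + t' j) * al j
   = a * \sum_(j < N) t j * al j + \sum_(j < N) t' j * al j.
  rewrite mulr_sumr -big_split; by apply: eq_bigr => j _; rewrite mulrDl mulrA.
ring.
Qed.

Definition Dop (e : V2) (g : V1 * V2 -> R) := fun p : V1 * V2 => g (p.1, p.2 + e) - g p.

Lemma haff_Dop e g : h_affine br g -> h_affine br (Dop e g).
Proof. by move=> hg; apply: haff_sub => //; apply: haff_central. Qed.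

Lemma Dop_comm e e' g : Dop e (Dop e' g) = Dop e' (Dop e g).
Proof.
apply: boolp.funext => p; rewrite /Dop /= [p.2 + e' + e]addrAC; ring.
Qed.

Lemma Dop_sq x y g : h_affine br g -> Dop (br x y) (Dop (br x y) g) = fun _ => 0.
Proof.
move=> hg; apply: boolp.funext => -[x0 z0]; rewrite /Dop /=.
have h := affE (F2 hg x0 x y z0).
rewrite scale0r addr0 scale1r in h.
have e2 : z0 + br x y + br x y = z0 + 2 *: br x y by rewrite scaler_nat mulr2n addrA.
rewrite e2 h; ring.
Qed.

Lemma Dop_zero e : Dop e (fun _ => 0) = fun _ => 0.
Proof. by apply: boolp.funext => p; rewrite /Dop subrr. Qed.


Lemma affine_transl f a : affine_map f -> affine_map (fun p => f (a + p.1, p.2 + br a p.1)).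
Proof.
case=> L [c [hL hf]].
exists (fun p => L (p.1, p.2 + br a p.1)), (L (a, 0) + c); split.
  move=> al p q /=; rewrite -hL; congr (L (_, _)).
  rewrite brDr brZr scalerDr -!addrA; f_equal; rewrite addrCA; f_equal; by rewrite addrC.
move=> p /=; rewrite hf.
have := hL 1 (a, 0) (p.1, p.2 + br a p.1); rewrite /= scale1r scaler0 add0r mul1r => ->.
ring.
Qed.

Section Fam.
Variables (N : nat) (u v : 'I_N -> V1).
Let E j := br (u j) (v j).
Hypothesis hE : forall z, exists t : 'I_N -> R, z = \sum_(j < N) t j *: E j.
Hypothesis hC : forall b : V1 -> V2 -> R, bilinear_form b ->
  (forall x x', b x (br x x') = 0) -> forall x z, b x z = 0.

Definition Dseq (s : seq 'I_N) g := foldr (fun j h => Dop (E j) h) g s.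

Lemma haff_Dseq s g : h_affine br g -> h_affine br (Dseq s g).
Proof. by move=> hg; elim: s => [|j s IH] //=; apply: haff_Dop. Qed.

Lemma Dseq_mem j s g : h_affine br g -> j \in s -> Dop (E j) (Dseq s g) = fun _ => 0.
Proof.
move=> hg; elim: s => [|k s IH] //= .
rewrite in_cons; case/orP=> [/eqP -> | js]; first by apply: Dop_sq; apply: haff_Dseq.
by rewrite Dop_comm IH // Dop_zero.
Qed.

Lemma Dseq_nuniq s g : h_affine br g -> ~~ uniq s -> Dseq s g = fun _ => 0.
Proof.
move=> hg; elim: s => [|k s IH] //=.
rewrite negb_and negbK; case/orP=> [ks | /IH ->]; first exact: Dseq_mem.
exact: Dop_zero.
Qed.

Lemma Dseq_big {s g} : h_affine br g -> (N < size s)%N -> Dseq s g = fun _ => 0.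
Proof.
move=> hg hs; apply: Dseq_nuniq => //; apply/negP => /card_uniqP hu.
have := max_card (mem s); rewrite hu card_ord => /(leq_trans hs).
by rewrite ltnn.
Qed.

Lemma KeyPsi {g} : h_affine br g -> (forall j, affine_map (Dop (E j) g)) ->
  forall x z, Ps g x z = Ps g x 0.
Proof.
move=> hg hD.
pose al j x := Ps g x (E j) - Ps g x 0.
have step1 : forall x z j, Ps g x (z + E j) - Ps g x z = al j x.
  have gen : forall x z j, Ps g x (z + E j) - Ps g x z = Ps g x (0 + E j) - Ps g x 0.
    move=> x z j; case: (hD j) => L [c [hL hf]].
    have dec : forall x z, L (x, z) = L (x, 0) + L (0, z).
      move=> x' z'; have := hL 1 (x', 0) (0, z'); rewrite /= scale1r scaler0 add0r addr0 mul1r //.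
    have ex : forall z, Ps g x (z + E j) - Ps g x z = L (x, 0).
      move=> z'; have e1 := hf (x, z'); have e2 := hf (0, z'); rewrite /Dop /= in e1 e2.
      rewrite /Ps; move: e1 e2; rewrite (dec x z') (dec 0 z') => e1 e2.
      have : L (0, 0) = 0.
        have := hL 1 (0, 0) (0, 0); rewrite /= !scaler0 !addr0 mul1r => h0; lra.
      lra.
    by rewrite !ex.
  by move=> x z j; rewrite gen add0r.
have step2 : forall x z j s, Ps g x (z + s *: E j) = Ps g x z + s * al j x.
  move=> x z j s.
  have h1 := affE (F2 hg x (u j) (v j) z); have h0 := affE (F2 hg 0 (u j) (v j) z).
  rewrite scale0r addr0 scale1r in h1; rewrite scale0r addr0 scale1r in h0.
  rewrite -(step1 x z j) /Ps /E h1 h0; ring.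
pose b x z := Ps g x z - Ps g x 0.
have hb : bilinear_form b.
  split.
    by move=> a x y z; rewrite /b !(PsD hg) !(PsZ hg); ring.
  move=> a x z w; rewrite /b.
  have := (@lin_rep _ _ hE _ _ (step2 x)) a z w; rewrite /E => ->; ring.
have hb0 : forall x x', b x (br x x') = 0.
  by move=> x x'; rewrite /b -[br x x']add0r -[br x x']scale1r (F3 hg) subrr.
move=> x z; have := hC b hb hb0 x z; rewrite /b => h; lra.
Qed.

Lemma Key g : h_affine br g -> (forall j, affine_map (Dop (E j) g)) -> affine_map g.
Proof.
move=> hg hD.
have hP := KeyPsi hg hD.
pose m z := g (0, z).
have hm : forall a x z, m (z + br a x) - m z = m (br a x) - m 0.
  move=> a x z.
  pose g' := fun p : V1 * V2 => g (a + p.1, p.2 + br a p.1).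
  have hg' : h_affine br g' by apply: haff_transl.
  have hD' : forall j, affine_map (Dop (E j) g').
    move=> j; have := affine_transl _ a (hD j).
    congr affine_map; apply: boolp.funext => p; rewrite /Dop /g' /=.
    by rewrite addrAC.
  have := KeyPsi hg' hD' x z; rewrite /Ps /g' /= !addr0 br0r !addr0 add0r.
  rewrite (gPs g (a + x)) (gPs g (a + x) (br a x)) (gPs g a) (gPs g a 0).
  rewrite (hP (a + x)) (hP (a + x) (br a x)) (hP a z) /m => h; lra.
have hn : forall z j s, m (z + s *: E j) = m z + s * (m (E j) - m 0).
  move=> z j s.
  have e := hm (s *: u j) (v j) z; rewrite brZl in e.
  have h0 := affE (F2 hg 0 (u j) (v j) 0) s.
  rewrite !add0r scale0r scale1r in h0.
  rewrite /E /m; rewrite /m in e; lra.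
have hlin := (@lin_rep _ _ hE _ _ hn).
exists (fun p => Ps g p.1 0 + (m p.2 - m 0)), (m 0); split.
  move=> a p q /=; rewrite hlin (PsD hg) (PsZ hg); ring.
move=> [x z] /=; rewrite (gPs g x z) hP /m; ring.
Qed.

Lemma all_affine g : h_affine br g -> affine_map g.
Proof.
have H : forall k (s : seq 'I_N) h, h_affine br h -> (N < size s + k)%N -> affine_map (Dseq s h).
  elim=> [|k IH] s h hh hlt.
    rewrite addn0 in hlt; rewrite (Dseq_big hh hlt).
    exists (fun _ => 0), 0; split => [a p q|p]; ring.
  apply: Key; first exact: haff_Dseq.
  move=> j; apply: (IH (j :: s)) => //=.
  by rewrite addSnnS.
move=> hg; exact: (H N.+1 [::] g hg (ltnSn N)).
Qed.

End Fam.


Lemma affine_haff f : affine_map f -> h_affine br f.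
Proof.
case=> L [c [hL hf]] [x z] y.
exists (L (y, br x y)), (L (x, z) + c) => t.
have e := hL t (y, br x y) (x, z); rewrite /= in e.
have e' : L (x + t *: y, z + 0 + br x (t *: y)) = L (t *: y + x, t *: br x y + z).
  by rewrite addr0 brZr [x + _]addrC [z + _]addrC.
by rewrite hf /gmul /= e' e; ring.
Qed.

Lemma bil_haff (b : V1 -> V2 -> R) : bilinear_form b -> (forall x x', b x (br x x') = 0) ->
  h_affine br (fun p => b p.1 p.2).
Proof.
case=> h1 h2 h0 [x z] y.
have bD1 : forall x y z, b (x + y) z = b x z + b y z.
  by move=> x' y' z'; rewrite -[x']scale1r h1 mul1r scale1r.
have bZ1 : forall a x z, b (a *: x) z = a * b x z.
  move=> a x' z'; have := h1 a x' 0 z'; rewrite addr0 => ->.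
  have := h1 1 0 0 z'; rewrite scale1r addr0 mul1r => h; lra.
have bD2 : forall x z w, b x (z + w) = b x z + b x w.
  by move=> x' z' w'; rewrite -[z']scale1r h2 mul1r scale1r.
have bZ2 : forall a x z, b x (a *: z) = a * b x z.
  move=> a x' z'; have := h2 a x' z' 0; rewrite addr0 => ->.
  have := h2 1 x' 0 0; rewrite scale1r addr0 mul1r => h; lra.
exists (b y z), (b x z) => t.
rewrite /gmul /= addr0 brZr bD1 !bD2 !bZ1 !bZ2 h0.
have -> : br x y = br y (- x) by rewrite brNr -brC.
rewrite h0; ring.
Qed.

Lemma bil_zero (b : V1 -> V2 -> R) : bilinear_form b -> affine_map (fun p => b p.1 p.2) -> forall x z, b x z = 0.
Proof.
case=> h1 h2 [L [c [hL hf]]] x z.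
have bZ1 : forall a x z, b (a *: x) z = a * b x z.
  move=> a x' z'; have := h1 a x' 0 z'; rewrite addr0 => ->.
  have := h1 1 0 0 z'; rewrite scale1r addr0 mul1r => h; lra.
have bZ2 : forall a x z, b x (a *: z) = a * b x z.
  move=> a x' z'; have := h2 a x' z' 0; rewrite addr0 => ->.
  have := h2 1 x' 0 0; rewrite scale1r addr0 mul1r => h; lra.
have L0 : L (0, 0) = 0.
  have := hL 1 (0, 0) (0, 0); rewrite /= !scaler0 !addr0 mul1r => h; lra.
have b00 : b 0 0 = 0 by rewrite -(scale0r 0) bZ1 mul0r.
have c0 : c = 0 by have := hf (0, 0); rewrite /= b00 L0; lra.
have e1 := hf (x, z); have e2 := hf (2 *: x, 2 *: z).
have := hL 2 (x, z) (0, 0); rewrite /= !addr0 L0 addr0 => h.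
rewrite /= bZ1 bZ2 h c0 in e2; rewrite /= c0 in e1; lra.
Qed.

End Main.

Theorem theorem5p12 (R : realType) (V1 V2 : vectType R)
  (br : V1 -> V1 -> V2) (HG : carnot2 br) :
  (forall f : V1 * V2 -> R, h_affine br f <-> affine_map f) <->
  (forall b : V1 -> V2 -> R, bilinear_form b ->
     (forall x x' : V1, b x (br x x') = 0) ->
     forall (x : V1) (z : V2), b x z = 0).
Proof.
case: HG => hbr [hs _]; split.
  move=> Hall b hb hb0; apply: (bil_zero _ _ _ _ hb).
  by apply/Hall; apply: (bil_haff _ _ _ _ hbr _ hb hb0).
move=> hC f; split; last exact: (affine_haff _ _ _ _ hbr f).
have [N [u [v hE]]] := span_fam _ _ _ _ hs.
exact: (all_affine _ _ _ _ hbr _ _ _ hE hC f).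
Qed.
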